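(* Let $V:\mathbb{R}^d\to\mathbb{R}^n$ be continuously differentiable and $h$-homogeneous, and assume there are constants $c,s,r,C>0$ with $c\Vert\theta\Vert^s\le\Vert V(\theta)\Vert_\mu\le C\Vert\theta\Vert^r$ for all $\theta$. Let $B=\frac{\Vert (I-\gamma P)V^*\Vert_\mu}{1-\gamma}=\frac{\Vert R\Vert_\mu}{1-\gamma}$. Then for any initial condition $\theta(0)=\theta_0$, if $\theta(t)$ follows the dynamics $$\dot\theta=-\nabla V(\theta)^T A\,(V(\theta)-V^* ),$$ we have $\limsup_{t\to\infty}\Vert V(\theta(t))\Vert_\mu\le C(B/c)^{r/s}$.
   Context: A Markov reward process has finite state space $\mathcal{S}$ with $|\mathcal{S}|=n$, transition matrix $P$ (entries $P(s'|s)$) defining an irreducible, aperiodic Markov chain with stationary distribution $\mu$, a finite reward function $r(s,s')$, and discount factor $\gamma\in[0,1)$. Let $R\in\mathbb{R}^n$ be $R(s)=\mathbb{E}_{s'\sim P(\cdot|s)}[r(s,s')]$, and let $V^*\in\mathbb{R}^n$ be the unique solution of $V^*=R+\gamma PV^*$. Let $D_\mu$ be the diagonal matrix with $\mu$ on the diagonal and $A:=D_\mu(I-\gamma P)$. For $x\in\mathbb{R}^n$, $\Vert x\Vert_\mu^2=x^TD_\mu x$; $\Vert\theta\Vert$ is the Euclidean norm. $\nabla V(\theta)$ is the $n\times d$ Jacobian of $V$. A differentiable function $f:\mathbb{R}^k\to\mathbb{R}^m$ is called $h$-homogeneous (for $h\in\mathbb{R}$) if $f(x)=h\,\nabla f(x)\,x$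 for all $x$. *)

(* Defs.v *)
From HB Require Import structures.
From mathcomp Require Import all_boot all_order all_algebra.
From mathcomp Require Import all_classical all_reals all_analysis.
Set Implicit Arguments. Unset Strict Implicit. Unset Printing Implicit Defensive.
Import Order.TTheory GRing.Theory Num.Theory.
Import numFieldNormedType.Exports.
Local Open Scope ring_scope.

Section Defs.
Variable R : realType.

(* P is a stochastic matrix: P i j = P(j | i). *)
Definition stochastic (n : nat) (P : 'M[R]_n) : Prop :=
  (forall i j, 0 <= P i j) /\ (forall i, \sum_j P i j = 1).

Definition irreducible (n : nat) (P : 'M[R]_n) : Prop :=
  forall i j : 'I_n, exists k : nat, 0 < (P ^+ k) i j.

Definition aperiodic (n : nat) (P : 'M[R]_n) : Prop :=
  forall (i : 'I_n) (d : nat),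
    (forall k : nat, (0 < k)%N -> 0 < (P ^+ k) i i -> (d %| k)%N) -> d = 1%N.

Definition stationary_distribution (n : nat) (P : 'M[R]_n) (mu : 'rV[R]_n) : Prop :=
  (forall i, 0 <= mu 0 i) /\ \sum_i mu 0 i = 1 /\ mu *m P = mu.

Definition exp_reward (n : nat) (P : 'M[R]_n) (rw : 'I_n -> 'I_n -> R) : 'cV[R]_n :=
  \col_i \sum_j P i j * rw i j.

Definition Dmu (n : nat) (mu : 'rV[R]_n) : 'M[R]_n := diag_mx mu.

Definition Amat (n : nat) (mu : 'rV[R]_n) (gamma : R) (P : 'M[R]_n) : 'M[R]_n :=
  Dmu mu *m (1%:M - gamma *: P).

Definition mu_norm (n : nat) (mu : 'rV[R]_n) (x : 'cV[R]_n) : R :=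
  Num.sqrt ((x^T *m Dmu mu *m x) 0 0).

Definition eucl_norm (d : nat) (x : 'cV[R]_d) : R :=
  Num.sqrt (\sum_j x j 0 ^+ 2).

Definition jac (d n : nat) (V : 'cV[R]_d -> 'cV[R]_n) (theta : 'cV[R]_d) : 'M[R]_(n, d) :=
  \matrix_(i, j) ('d V theta (delta_mx j 0)) i 0.

Definition C1 (d n : nat) (V : 'cV[R]_d -> 'cV[R]_n) : Prop :=
  (forall theta, differentiable V theta) /\ continuous (jac V).

Definition homogeneous (d n : nat) (h : R) (V : 'cV[R]_d -> 'cV[R]_n) : Prop :=
  forall theta, V theta = h *: (jac V theta *m theta).

End Defs.

(* Main.v *)
Require Import Defs.
From HB Require Import structures.
From mathcomp Require Import all_boot all_order all_algebra.
From mathcomp Require Import all_classical all_reals all_analysis.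
From mathcomp Require Import ring lra.
Import Order.TTheory GRing.Theory Num.Theory.
Import numFieldNormedType.Exports.
Local Open Scope classical_set_scope.
Local Open Scope ring_scope.
Set Implicit Arguments. Unset Strict Implicit.

Section S0.
Variable R : realType.

Definition qf n (mu : 'rV[R]_n) (x y : 'cV[R]_n) := \sum_i mu 0 i * x i 0 * y i 0.

Lemma qfE n (mu : 'rV[R]_n) x y : (x^T *m Dmu mu *m y) 0 0 = qf mu x y.
Proof.
rewrite /Dmu mul_mx_diag mxE /qf; apply: eq_bigr => i _.
by rewrite !mxE [x i 0 * _]mulrC.
Qed.

Lemma qf_ge0 n (mu : 'rV[R]_n) x : (forall i, 0 <= mu 0 i) -> 0 <= qf mu x x.
Proof.
move=> H; apply: sumr_ge0 => i _; rewrite -mulrA mulr_ge0 //.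
by rewrite -expr2 sqr_ge0.
Qed.

Lemma mu_norm_sq n (mu : 'rV[R]_n) x : (forall i, 0 <= mu 0 i) ->
  mu_norm mu x ^+ 2 = qf mu x x.
Proof. by move=> H; rewrite /mu_norm qfE sqr_sqrtr // qf_ge0. Qed.

Lemma mu_norm_ge0 n (mu : 'rV[R]_n) x : 0 <= mu_norm mu x.
Proof. exact: sqrtr_ge0. Qed.

Lemma qf_amgm n (mu : 'rV[R]_n) x y (l : R) : (forall i, 0 <= mu 0 i) -> 0 < l ->
  2 * qf mu x y <= l * qf mu x x + qf mu y y / l.
Proof.
move=> H l0; rewrite /qf mulr_sumr mulr_sumr mulr_suml -big_split /=.
apply: ler_sum => i _.
have : 0 <= mu 0 i * ((l * x i 0 - y i 0) ^+ 2 / l).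
  by rewrite mulr_ge0 // divr_ge0 ?sqr_ge0 // ltW.
have l0' : l != 0 by rewrite gt_eqF.
have -> : mu 0 i * ((l * x i 0 - y i 0) ^+ 2 / l) =
   l * (mu 0 i * x i 0 * x i 0) + mu 0 i * y i 0 * y i 0 / l - 2 * (mu 0 i * x i 0 * y i 0).
  by field.
by rewrite subr_ge0.
Qed.

Lemma qf_P n (mu : 'rV[R]_n) (P : 'M[R]_n) x :
  stochastic P -> stationary_distribution P mu ->
  qf mu x (P *m x) <= qf mu x x.
Proof.
move=> [P0 P1] [mu0 [_ muP]].
have E1 : \sum_i \sum_j mu 0 i * P i j * x i 0 ^+ 2 = qf mu x x.
  rewrite /qf; apply: eq_bigr => i _.
  by rewrite -mulr_suml -mulr_sumr P1 mulr1 -mulrA -expr2.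
have E2 : \sum_i \sum_j mu 0 i * P i j * x j 0 ^+ 2 = qf mu x x.
  rewrite exchange_big /qf; apply: eq_bigr => j _.
  rewrite -mulr_suml.
  have -> : \sum_i mu 0 i * P i j = mu 0 j by rewrite -{2}muP mxE.
  by rewrite -mulrA.
have E3 : qf mu x (P *m x) = \sum_i \sum_j mu 0 i * P i j * (x i 0 * x j 0).
  rewrite /qf; apply: eq_bigr => i _; rewrite mxE mulr_sumr.
  by apply: eq_bigr => j _; ring.
suff : 2 * qf mu x (P *m x) <= 2 * qf mu x x by rewrite ler_pM2l.
have -> : 2 * qf mu x x = (\sum_i \sum_j mu 0 i * P i j * x i 0 ^+ 2) + (\sum_i \sum_j mu 0 i * P i j * x j 0 ^+ 2).
  by rewrite E1 E2 mulr2n mulrDl mul1r.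
rewrite E3 mulr_sumr -big_split /=; apply: ler_sum => i _.
rewrite mulr_sumr -big_split /=; apply: ler_sum => j _.
have : 0 <= mu 0 i * P i j * (x i 0 - x j 0) ^+ 2.
  by rewrite mulr_ge0 ?sqr_ge0 // mulr_ge0.
have -> : mu 0 i * P i j * (x i 0 - x j 0) ^+ 2 =
  mu 0 i * P i j * x i 0 ^+ 2 + mu 0 i * P i j * x j 0 ^+ 2 - 2 * (mu 0 i * P i j * (x i 0 * x j 0)) by ring.
by rewrite subr_ge0.
Qed.
End S0.

Section S1.
Variable R : realType.

Lemma qfD n (mu : 'rV[R]_n) x y z : qf mu x (y + z) = qf mu x y + qf mu x z.
Proof. by rewrite /qf -big_split; apply: eq_bigr => i _; rewrite !mxE mulrDr. Qed.
Lemma qfN n (mu : 'rV[R]_n) x y : qf mu x (- y) = - qf mu x y.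
Proof. by rewrite /qf -sumrN; apply: eq_bigr => i _; rewrite !mxE mulrN. Qed.
Lemma qfZ n (mu : 'rV[R]_n) x y (a : R) : qf mu x (a *: y) = a * qf mu x y.
Proof. by rewrite /qf mulr_sumr; apply: eq_bigr => i _; rewrite !mxE; ring. Qed.

Lemma AmatE n (mu : 'rV[R]_n) g P u w :
  (u^T *m Amat mu g P *m w) 0 0 = qf mu u w - g * qf mu u (P *m w).
Proof.
rewrite /Amat mulmxA -(mulmxA _ _ w) mulmxBl mul1mx -scalemxAl mulmxBr.
by rewrite mxE [X in _ + X]mxE -scalemxAr [X in _ - X]mxE !qfE.
Qed.

Lemma flowE d n (J : 'M[R]_(n,d)) (th : 'cV[R]_d) (v w : 'cV[R]_n) M (h : R) :
  h != 0 -> v = h *: (J *m th) ->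
  \sum_j (1:R) * (2 * th j 0 * (- (J^T *m M *m w)) j 0) = - (2 / h) * (v^T *m M *m w) 0 0.
Proof.
move=> h0 hv.
have Jth : J *m th = h^-1 *: v by rewrite hv scalerA mulVf // scale1r.
have -> : \sum_j (1:R) * (2 * th j 0 * (- (J^T *m M *m w)) j 0)
   = 2 * (th^T *m (- (J^T *m M *m w))) 0 0.
  by rewrite mxE mulr_sumr; apply: eq_bigr => j _; rewrite !mxE mul1r mulrA.
rewrite mulmxN mulmxA mulmxA -trmx_mul Jth linearZ /= -!scalemxAl.
by rewrite !mxE; ring.
Qed.

Lemma lower n (mu : 'rV[R]_n) (P : 'M[R]_n) g v Vs Rw :
  stochastic P -> stationary_distribution P mu -> 0 <= g -> g < 1 ->
  Vs - g *: (P *m Vs) = Rw ->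
  ((1 - g) * mu_norm mu v ^+ 2 - mu_norm mu Rw ^+ 2 / (1 - g)) / 2
    <= (v^T *m Amat mu g P *m (v - Vs)) 0 0.
Proof.
move=> sP sm g0 g1 HR.
have mu0 : forall i, 0 <= mu 0 i by case: sm.
rewrite AmatE !mu_norm_sq //.
have -> : qf mu v (v - Vs) - g * qf mu v (P *m (v - Vs))
   = qf mu v v - g * qf mu v (P *m v) - qf mu v Rw.
  rewrite -HR mulmxBr !qfD !qfN qfZ; ring.
have H1 := qf_P v sP sm.
have l0 : 0 < 1 - g by rewrite subr_gt0.
have H2 := qf_amgm v Rw mu0 l0.
have H3 : g * qf mu v (P *m v) <= g * qf mu v v by rewrite ler_wpM2l.
set a := qf mu v v in H2 H3 *; set b := qf mu Rw Rw in H2 *.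
set c := qf mu v Rw in H2 *; set e := qf mu v (P *m v) in H3 *.
set q := b / (1 - g) in H2 *.
lra.
Qed.
End S1.

Section S2.
Variable R : realType.

Lemma is_derive_entry k m (f : R -> 'M[R]_(k,m)) (t : R) df i j :
  is_derive t 1 f df -> is_derive t (1:R) (fun u => f u i j) (df i j).
Proof.
move=> [dfx <-].
have E : (fun h : R => h^-1 *: (((fun u => f u i j) \o shift t) (h *: (1:R)) - f t i j))
   = (fun N : 'M[R]_(k,m) => N i j) \o (fun h : R => h^-1 *: ((f \o shift t) (h *: (1:R)) - f t)).
  by apply/funext => h /=; rewrite !mxE.
have H : (fun h : R => h^-1 *: (((fun u => f u i j) \o shift t) (h *: (1:R)) - f t i j)) @ 0^'
   --> ('D_1 f t) i j.
  rewrite E; apply: continuous_cvg; first exact: coord_continuous.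
  exact: dfx.
apply: DeriveDef; first by apply/cvg_ex; eexists; exact: H.
exact: cvg_lim H.
Qed.

Lemma is_derive_wsum k (w : 'I_k -> R) (f : R -> 'cV[R]_k) (t : R) df :
  is_derive t (1:R) f df ->
  is_derive t (1:R) (fun u => \sum_i w i * f u i 0 ^+ 2)
     (\sum_i w i * (2 * f t i 0 * df i 0)).
Proof.
move=> D.
have -> : (fun u => \sum_i w i * f u i 0 ^+ 2) = \sum_i (fun u => w i * f u i 0 ^+ 2).
  by apply/funext => u; rewrite fct_sumE.
apply: is_derive_sum => i.
have Di := @is_derive_entry _ _ f t df i 0 D.
have -> : (fun u => w i * f u i 0 ^+ 2) = (w i) *: ((fun u => f u i 0) ^+ 2).
  by apply/funext => u /=; rewrite /GRing.scale/= exprfctE.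
apply: is_derive_eq.
by rewrite /GRing.scale /= expr1 mulrA.
Qed.
Lemma diff_jac d n (V : 'cV[R]_d -> 'cV[R]_n) y x : 'd V y x = jac V y *m x.
Proof.
have Ex : x = \sum_j x j 0 *: delta_mx j 0.
  rewrite {1}(matrix_sum_delta x); apply: eq_bigr => j _.
  by rewrite big_ord1.
rewrite {1}Ex linear_sum /=.
apply/matrixP => i k; rewrite ord1 !mxE summxE; apply: eq_bigr => j _.
by rewrite linearZ /= !mxE mulrC.
Qed.

Lemma ray_derive d n (V : 'cV[R]_d -> 'cV[R]_n) x (t : R) :
  differentiable V (t *: x) ->
  is_derive t (1:R) (fun u : R => V (u *: x)) ('d V (t *: x) x).
Proof.
move=> dV.
have E : (fun h : R => h^-1 *: (((fun u : R => V (u *: x)) \o shift t) (h *: (1:R)) - V (t *: x)))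
   = (fun h : R => h^-1 *: ((V \o shift (t *: x)) (h *: x) - V (t *: x))).
  apply/funext => h /=; congr (_ *: (V _ - _)).
  by rewrite scalerDl /GRing.scale /= mulr1.
have dx : derivable V (t *: x) x by exact: diff_derivable.
apply: DeriveDef.
  by rewrite /derivable E.
by rewrite /derive E -deriveE.
Qed.
End S2.

Section S3.
Variable R : realType.

Lemma eucl_pos d (y : 'cV[R]_d) : y != 0 -> 0 < eucl_norm y.
Proof.
move=> y0; rewrite /eucl_norm sqrtr_gt0.
have [j yj] : exists j, y j 0 != 0.
  apply/not_existsP => H; move/eqP: y0; apply; apply/matrixP => i k.
  rewrite ord1 mxE; apply/eqP; apply: contra_notT (H i) => ->.
  done.
rewrite (bigD1 j) //=; apply: ltr_wpDr.
  by apply: sumr_ge0 => i _; exact: sqr_ge0.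
by rewrite lt_def sqr_ge0 andbT sqrf_eq0.
Qed.

Lemma mu_norm0 n (mu : 'rV[R]_n) : mu_norm mu 0 = 0.
Proof. by rewrite /mu_norm mulmx0 mxE sqrtr0. Qed.


Lemma h_pos d n (mu : 'rV[R]_n) (V : 'cV[R]_d -> 'cV[R]_n) (h c s C r : R) (x : 'cV[R]_d) :
  (forall i, 0 <= mu 0 i) -> C1 V -> homogeneous h V -> 0 < c ->
  (forall th, c * eucl_norm th `^ s <= mu_norm mu (V th) /\
              mu_norm mu (V th) <= C * eucl_norm th `^ r) ->
  x != 0 -> 0 < h.
Proof.
move=> mu0 [dV _] hom c0 bnd x0.
have Vpos : forall t : R, t != 0 -> 0 < mu_norm mu (V (t *: x)).
  move=> t t0; apply: lt_le_trans (proj1 (bnd _)).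
  rewrite mulr_gt0 // powR_gt0 // eucl_pos //.
  by rewrite scaler_eq0 negb_or t0.
have h0 : h != 0.
  apply/eqP => h0; have := Vpos 1 (oner_neq0 _).
  by rewrite hom h0 scale0r mu_norm0 ltxx.
rewrite lt_neqAle eq_sym h0 /=; rewrite leNgt; apply/negP => hneg.
pose q := fun u : R => \sum_i mu 0 i * V (u *: x) i 0 ^+ 2.
have qE : forall u, q u = mu_norm mu (V (u *: x)) ^+ 2.
  move=> u; rewrite mu_norm_sq // /q /qf; apply: eq_bigr => i _.
  by rewrite -mulrA -expr2.
have Dq : forall y : R, is_derive y (1:R) q
    (\sum_i mu 0 i * (2 * V (y *: x) i 0 * ('d V (y *: x) x) i 0)).
  move=> y; apply: is_derive_wsum; exact: ray_derive.
have Dq' : forall y : R, 0 < y -> is_derive y (1:R) q (2 / (h * y) * q y).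
  move=> y y0; apply: (is_derive_eq (Dq y)).
  have hy : h * y != 0 by rewrite mulf_neq0 // gt_eqF.
  have E : 'd V (y *: x) x = (h * y)^-1 *: V (y *: x).
    by rewrite diff_jac [in RHS]hom -scalemxAr scalerA scalerA -mulrA mulVf // scale1r.
  rewrite E /q mulr_sumr; apply: eq_bigr => i _; rewrite !mxE; field.
  by rewrite h0 gt_eqF.
have qpos : forall y, y != 0 -> 0 < q y.
  by move=> y y0; rewrite qE exprn_gt0 // Vpos.
have q0 : q 0 = 0.
  rewrite qE scale0r hom mulmx0 scaler0 mu_norm0; by rewrite expr0n.
have qlt : forall t, 0 < t -> t < 1 -> q 1 < q t.
  move=> t t0 t1.
  have Dqo : forall y, y \in `]t, 1[ -> is_derive y (1:R) q (2 / (h * y) * q y).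
    move=> y; rewrite in_itv /= => /andP[ty _]; apply: Dq'; exact: lt_trans ty.
  have Dqc : {within `[t, 1], continuous q}.
    apply: derivable_within_continuous => y; rewrite in_itv /= => /andP[ty _].
    by case: (Dq' y (lt_le_trans t0 ty)).
  have [xi xiI Hxi] := MVT t1 Dqo Dqc.
  have xi0 : 0 < xi.
    by move: xiI; rewrite in_itv /= => /andP[txi _]; exact: lt_trans txi.
  have hxi : h * xi < 0 by rewrite (pmulr_llt0 _ xi0).
  have qxi := qpos xi (lt0r_neq0 xi0).
  have t1' : 0 < 1 - t by rewrite subr_gt0.
  rewrite -subr_lt0 Hxi (pmulr_llt0 _ t1') (pmulr_llt0 _ qxi).
  by rewrite (pmulr_rlt0 _ (ltr0n _ 2)) invr_lt0.
have cq : q x @[x --> (0:R)] --> q 0.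
  apply: differentiable_continuous; apply/derivable1_diffP.
  by case: (Dq 0).
have cq' := cvg_at_right_filter cq.
have q1 : q 0 < q 1 by rewrite q0 qpos // oner_neq0.
have [u [[Hu1 Hu2] Hu3]] : exists u, (q u < q 1 /\ 0 < u) /\ u < 1.
  apply: (filter_ex (F := (0:R)^'+)).
  near=> u; split; [split|].
  - near: u; exact: (cvgr_lt (q 0) cq' (q 1) q1).
  - near: u; exact: nbhs_right_gt.
  - near: u; exact: nbhs_right_lt ltr01.
have := qlt u Hu2 Hu3; rewrite /= in Hu1.
by rewrite ltNge (ltW Hu1).
Unshelve. all: by end_near.
Qed.
End S3.

Section S4.
Variable R : realType.

Lemma ode_bound (N N' : R -> R) (L k : R) :
  0 < k -> (forall t, 0 <= N t) -> (forall t : R, 0 < t -> is_derive t (1:R) N (N' t)) ->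
  (forall t : R, 0 < t -> L < N t -> N' t <= - k) ->
  exists a, forall t, a <= t -> N t <= L.
Proof.
move=> k0 N0 DN HN.
have cont : forall a b : R, 0 < a -> {within `[a, b], continuous N}.
  move=> a b a0; apply: derivable_within_continuous => y; rewrite in_itv /= => /andP[ay _].
  by case: (DN y (lt_le_trans a0 ay)).
have mvt : forall a b : R, 0 < a -> a < b -> (forall u, a < u < b -> L < N u) ->
    N b - N a <= - k * (b - a).
  move=> a b a0 ab Hab.
  have Do : forall y, y \in `]a, b[ -> is_derive y (1:R) N (N' y).
    move=> y; rewrite in_itv /= => /andP[ay _]; apply: DN; exact: lt_trans ay.
  have [xi xiI ->] := MVT ab Do (cont a b a0).
  move: xiI; rewrite in_itv /= => /andP[axi xib].
  rewrite ler_pM2r ?subr_gt0 //; apply: HN; first exact: lt_trans axi.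
  by apply: Hab; rewrite axi xib.
have stay : forall a b, 1 <= a -> a <= b -> N a <= L -> N b <= L.
  move=> a b a1 ab Na; rewrite leNgt; apply/negP => Nb.
  have a0 : 0 < a by apply: lt_le_trans a1; exact: ltr01.
  have [m mI Hm] := EVT_max ab (cont a b a0).
  move: (mI); rewrite in_itv /= => /andP[am mb].
  have NmL : L < N m by apply: lt_le_trans Nb (Hm b _); rewrite in_itv /= ab lexx.
  have am' : a < m.
    by rewrite lt_def am andbT; apply/eqP => ma; move: NmL; rewrite ma ltNge Na.
  have cN : N x @[x --> m] --> N m.
    by apply: differentiable_continuous; apply/derivable1_diffP; case: (DN m (lt_trans a0 am')).
  have Nnear : \forall u \near m, L < N u.
    near=> u; near: u; exact: (cvgr_gt (N m) cN L NmL).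
  have [e [e0 He]] : exists e, 0 < e /\ {in `[m - e, m + e], forall u, L < N u}.
    move/at_right_in_segment: Nnear => H.
    apply: (filter_ex (F := (0:R)^'+)); near=> e; split.
      by near: e; exact: nbhs_right_gt.
    by near: e; exact: H.
  pose m' := Order.max a (m - e / 2).
  have m'm : m' < m by rewrite gt_max am' /= gtrBl divr_gt0.
  have am'' : a <= m' by rewrite le_max lexx.
  have := mvt m' m (lt_le_trans a0 am'') m'm.
  have H : forall u, m' < u < m -> L < N u.
    move=> u /andP[m'u um]; apply: He; rewrite in_itv /=.
    have e2 : m - e <= m - e / 2 by rewrite lerB // ler_pdivrMr // ler_pMr // ler1n.
    have m'2 : m - e / 2 <= m' by rewrite le_max lexx orbT.
    apply/andP; split; first by lra.
    have : 0 <= e by exact: ltW.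
    lra.
  move=> /(_ H) Hle.
  have : N m' <= N m by apply: Hm; rewrite in_itv /= am'' (le_trans (ltW m'm) mb).
  have : 0 < k * (m - m') by rewrite mulr_gt0 // subr_gt0.
  lra.
set T := 2 + N 1 / k.
have [a [a1 Na]] : exists a, 1 <= a /\ N a <= L.
  apply/not_existsP => H.
  have H' : forall u, 1 < u < T -> L < N u.
    move=> u /andP[u1 _]; rewrite ltNge; apply/negP => Hn; apply: (H u).
    by split => //; exact: ltW.
  have T1 : 1 < T.
    rewrite /T; have : 0 <= N 1 / k by rewrite divr_ge0 // ?N0 // ltW.
    lra.
  have := mvt 1 T ltr01 T1 H'.
  have : N 1 / k * k = N 1 by rewrite divfK // gt_eqF.
  have := N0 T; rewrite /T.
  nra.
exists a => t at0; exact: stay a1 at0 Na.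
Unshelve. all: by end_near.
Qed.
End S4.

Unset Implicit Arguments. Set Strict Implicit.

Theorem mainTheorem2 (R : realType) (n d : nat)
  (P : 'M[R]_n) (mu : 'rV[R]_n) (rw : 'I_n -> 'I_n -> R) (gamma : R)
  (Vstar : 'cV[R]_n)
  (V : 'cV[R]_d -> 'cV[R]_n) (h c s r C : R)
  (theta : R -> 'cV[R]_d) :
  stochastic P -> irreducible P -> aperiodic P ->
  stationary_distribution P mu ->
  0 <= gamma -> gamma < 1 ->
  Vstar = exp_reward P rw + gamma *: (P *m Vstar) ->
  C1 V -> homogeneous h V ->
  0 < c -> 0 < s -> 0 < r -> 0 < C ->
  (forall th, c * eucl_norm th `^ s <= mu_norm mu (V th) /\
              mu_norm mu (V th) <= C * eucl_norm th `^ r) ->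
  {within [set t : R | 0 <= t], continuous theta} ->
  (forall t : R, 0 < t ->
     is_derive t 1 theta (- ((jac V (theta t))^T *m Amat mu gamma P *m (V (theta t) - Vstar)))) ->
  let B := mu_norm mu (exp_reward P rw) / (1 - gamma) in
  forall eps : R, 0 < eps ->
    \forall t \near +oo, mu_norm mu (V (theta t)) <= C * (B / c) `^ (r / s) + eps.
Proof.
move=> sP _ _ sm g0 g1 Hbell C1V hom c0 s0 r0 C0 bnd _ Dth B eps eps0.
have mu0 : forall i, 0 <= mu 0 i by case: sm.
have HR : Vstar - gamma *: (P *m Vstar) = exp_reward P rw by rewrite {1}Hbell addrK.
have g1' : 0 < 1 - gamma by rewrite subr_gt0.
have B0 : 0 <= B by rewrite /B divr_ge0 ?mu_norm_ge0 // ltW.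
have RwB : mu_norm mu (exp_reward P rw) = (1 - gamma) * B.
  by rewrite /B mulrC divfK // gt_eqF.
have rhs0 : 0 <= C * (B / c) `^ (r / s) by rewrite mulr_ge0 ?powR_ge0 // ltW.
case: (pselect (exists x : 'cV[R]_d, x != 0)) => [[x x0]|nox]; last first.
  have z : forall y : 'cV[R]_d, y = 0.
    move=> y; case: (eqVneq y 0) => // y0; exfalso; apply: nox; by exists y.
  apply: nearW => t.
  have := proj2 (bnd (theta t)); rewrite (z (theta t)).
  have -> : eucl_norm (0 : 'cV[R]_d) = 0.
    by rewrite /eucl_norm big1 ?sqrtr0 // => j _; rewrite mxE expr0n.
  rewrite powR0 ?gt_eqF // mulr0 => H; apply: le_trans H _.
  by rewrite addr_ge0 // ltW.
have h0 := h_pos mu0 C1V hom c0 bnd x0.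
set X := B / c.
have X0 : 0 <= X by rewrite /X divr_ge0 // ltW.
set rho := X `^ (s^-1).
have rho0 : 0 <= rho := powR_ge0 _ _.
set K := rho `^ r + eps / C.
set rho' := K `^ (r^-1).
have K0 : 0 <= K by rewrite /K addr_ge0 ?powR_ge0 // divr_ge0 // ltW.
have rho'r : rho' `^ r = K by rewrite /rho' -powRrM mulVf ?gt_eqF // powRr1.
have rhor : rho `^ r = X `^ (r / s) by rewrite /rho -powRrM mulrC.
have rhos : rho `^ s = X by rewrite /rho -powRrM mulVf ?gt_eqF // powRr1.
have rho'0 : 0 <= rho' := powR_ge0 _ _.
have rho_lt : rho < rho'.
  have : rho `^ r < K by rewrite /K ltrDl divr_gt0.
  have ri : 0 < r^-1 by rewrite invr_gt0.
  move/(gt0_ltr_powR ri).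
  rewrite -powRrM mulfV ?gt_eqF // powRr1 //; apply.
    by rewrite nnegrE powR_ge0.
  by rewrite nnegrE.
set B1 := c * rho' `^ s.
have BB1 : B < B1.
  have : rho `^ s < rho' `^ s by apply: gt0_ltr_powR; rewrite ?nnegrE.
  rewrite rhos /B1 => H.
  have -> : B = c * X by rewrite /X mulrC divfK // gt_eqF.
  by rewrite ltr_pM2l.
set L := rho' ^+ 2.
set k1 := (1 - gamma) * (B1 ^+ 2 - B ^+ 2) / 2.
have k10 : 0 < k1.
  rewrite /k1 divr_gt0 // mulr_gt0 // subr_gt0 ltrXn2r //.
set k := (2 / h) * k1.
have k0 : 0 < k by rewrite /k mulr_gt0 // divr_gt0.
pose N := fun t => \sum_j (1:R) * theta t j 0 ^+ 2.
pose N' := fun t => - (2 / h) * ((V (theta t))^T *m Amat mu gamma P *m (V (theta t) - Vstar)) 0 0.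
have NE : forall t, N t = eucl_norm (theta t) ^+ 2.
  move=> t; rewrite /eucl_norm sqr_sqrtr; last by apply: sumr_ge0 => j _; exact: sqr_ge0.
  by rewrite /N; apply: eq_bigr => j _; rewrite mul1r.
have N0 : forall t, 0 <= N t by move=> t; rewrite NE sqr_ge0.
have DN : forall t : R, 0 < t -> is_derive t (1:R) N (N' t).
  move=> t t0; apply: (is_derive_eq (is_derive_wsum (fun=> 1) (Dth t t0))).
  by rewrite /N'; apply: flowE; [rewrite gt_eqF | exact: hom].
have HN : forall t : R, 0 < t -> L < N t -> N' t <= - k.
  move=> t t0 LN.
  have e0 : 0 <= eucl_norm (theta t) by exact: sqrtr_ge0.
  have e_gt : rho' < eucl_norm (theta t).
    rewrite ltNge; apply/negP => H; move: LN; rewrite NE /L ltNge.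
    by rewrite (lerXn2r 2 _ _ H) ?nnegrE.
  have VB1 : B1 <= mu_norm mu (V (theta t)).
    apply: le_trans (proj1 (bnd _)); rewrite /B1 ler_pM2l //.
    by apply: ge0_ler_powR; rewrite ?nnegrE // ltW.
  have low := lower (V (theta t)) sP sm g0 g1 HR.
  rewrite RwB in low.
  have E : ((1 - gamma) * B) ^+ 2 / (1 - gamma) = (1 - gamma) * B ^+ 2.
    by field; rewrite gt_eqF.
  rewrite E in low.
  have B10 : 0 <= B1 by exact: (le_trans B0 (ltW BB1)).
  have M2 : B1 ^+ 2 <= mu_norm mu (V (theta t)) ^+ 2.
    by rewrite (lerXn2r 2 _ _ VB1) ?nnegrE ?mu_norm_ge0.
  have Hk : k1 <= ((V (theta t))^T *m Amat mu gamma P *m (V (theta t) - Vstar)) 0 0.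
    apply: le_trans low; rewrite /k1.
    set M := mu_norm mu (V (theta t)) in M2 *.
    nra.
  rewrite /N' /k mulNr lerN2 ler_pM2l //.
  by rewrite divr_gt0.
have [a Ha] := ode_bound k0 N0 DN HN.
near=> t.
have at0 : a <= t.
  by apply: ltW; near: t; apply: nbhs_pinfty_gt; rewrite num_real.
have := Ha t at0; rewrite NE /L => H2.
have e0 : 0 <= eucl_norm (theta t) by exact: sqrtr_ge0.
have e_le : eucl_norm (theta t) <= rho'.
  rewrite leNgt; apply/negP => H; move: H2; rewrite leNgt.
  by rewrite (ltrXn2r 2 rho'0 H).
apply: le_trans (proj2 (bnd _)) _.
rewrite -/X -rhor.
have : C * eucl_norm (theta t) `^ r <= C * rho' `^ r.
  by rewrite ler_pM2l //; apply: ge0_ler_powR; rewrite ?nnegrE // ltW.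
rewrite rho'r /K mulrDr mulrCA mulfV ?gt_eqF // mulr1.
by [].
Unshelve. all: by end_near.
Qed.
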